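(* Consider an environment $W$ containing a set of static sensors (closed disks at fixed positions) and a set of mobile sensors $ms_1,\ldots,ms_m$ with (possibly different) sensing radii, and let the covered area be the area of the part of $W$ covered by the union of all sensor disks. The greedy algorithm Greedy-HHP, which for $i=1,\ldots,m$ in turn moves mobile sensor $ms_i$ to the position (over the holes) that maximizes the covered area given the static sensors and the already placed mobile sensors $ms_1,\ldots,ms_{i-1}$, and then updates the holes, achieves an approximation ratio of $1/2$ for the problem of maximizing the covered area by moving the mobile sensors; i.e., the covered area it achieves is at least half of the maximum achievable covered area.
   Context: A hole is a maximal region of $W$ (outside obstacles, if any) not covered by any sensor disk. The hole healing problem asks to choose new positions for the mobile sensors so as to maximize the covered area of $W$ (equivalently, recover as much hole area as possible). *)

(* Defs.v *)
From HB Require Import structures.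
From mathcomp Require Import all_boot all_order all_algebra.
From mathcomp Require Import all_classical all_reals all_analysis.
Set Implicit Arguments. Unset Strict Implicit. Unset Printing Implicit Defensive.
Import Order.TTheory GRing.Theory Num.Theory.
Local Open Scope classical_set_scope.
Local Open Scope ring_scope.

Definition disk (R : realType) (c : R * R) (r : R) : set (R * R) :=
  [set x | (x.1 - c.1) ^+ 2 + (x.2 - c.2) ^+ 2 <= r ^+ 2].

Definition area (R : realType) (A : set (R * R)) : \bar R :=
  ((@lebesgue_measure R) \x (@lebesgue_measure R))%E A.

Definition static_cover (R : realType) (n : nat) (s : 'I_n -> R * R)
  (rs : 'I_n -> R) : set (R * R) :=
  \bigcup_(k in [set: 'I_n]) disk (s k) (rs k).

Definition mobile_cover (R : realType) (m : nat) (rm : 'I_m -> R)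
  (p : 'I_m -> R * R) (J : set 'I_m) : set (R * R) :=
  \bigcup_(j in J) disk (p j) (rm j).

Definition covered_area (R : realType) (W : set (R * R)) (n : nat)
  (s : 'I_n -> R * R) (rs : 'I_n -> R) (m : nat) (rm : 'I_m -> R)
  (p : 'I_m -> R * R) (J : set 'I_m) : \bar R :=
  area (W `&` (static_cover s rs `|` mobile_cover rm p J)).

(* g is a run of Greedy-HHP: for i = 1..m in turn, g i maximizes the covered
   area given the static sensors and the already placed mobile sensors j < i,
   over all admissible positions in Pos. *)
Definition greedy_HHP (R : realType) (W : set (R * R)) (Pos : set (R * R))
  (n : nat) (s : 'I_n -> R * R) (rs : 'I_n -> R) (m : nat) (rm : 'I_m -> R)
  (g : 'I_m -> R * R) : Prop :=
  forall i : 'I_m,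
    Pos (g i) /\
    forall q : R * R, Pos q ->
      (area (W `&` (static_cover s rs
                    `|` mobile_cover rm g [set j | (j < i)%N]
                    `|` disk q (rm i)))
       <= covered_area W s rs rm g [set j | (j <= i)%N])%E.

(* Main.v *)
Require Import Defs.
From HB Require Import structures.
From mathcomp Require Import all_boot all_order all_algebra.
From mathcomp Require Import all_classical all_reals all_analysis.
From mathcomp Require Import ring lra.
Import Order.TTheory GRing.Theory Num.Theory.
Local Open Scope classical_set_scope.
Local Open Scope ring_scope.

Lemma disk_meas (R : realType) (c : R * R) (r : R) :
  measurable (disk c r).
Proof.
have m1 : measurable_fun setT (fun x : R * R => x.1 - c.1).
  by apply: (measurable_realfun.measurable_funB (f := fst) (g := cst c.1)) => //.
have m2 : measurable_fun setT (fun x : R * R => x.2 - c.2).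
  by apply: (measurable_realfun.measurable_funB (f := snd) (g := cst c.2)) => //.
have mf : measurable_fun setT (fun x : R * R => (x.1 - c.1) ^+ 2 + (x.2 - c.2) ^+ 2).
  apply: (measurable_realfun.measurable_funD
     (f := fun x : R * R => (x.1 - c.1) ^+ 2) (g := fun x : R * R => (x.2 - c.2) ^+ 2)).
    exact: measurable_realfun.measurable_funX.
  exact: measurable_realfun.measurable_funX.
have := mf measurableT `]-oo, r ^+ 2]%classic.
by rewrite setTI; apply.
Qed.

Lemma mob_meas (R : realType) (m : nat) (rm : 'I_m -> R) (p : 'I_m -> R * R)
  (J : set 'I_m) : measurable (mobile_cover rm p J).
Proof.
apply: fin_bigcup_measurable; first exact: finite_finset.
by move=> i _; exact: disk_meas.
Qed.

Lemma stat_meas (R : realType) (n : nat) (s : 'I_n -> R * R) (rs : 'I_n -> R) :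
  measurable (static_cover s rs).
Proof.
apply: fin_bigcup_measurable; first exact: finite_finset.
by move=> i _; exact: disk_meas.
Qed.

Lemma area_le (R : realType) (A B : set (R * R)) :
  measurable A -> measurable B -> A `<=` B -> (area A <= area B)%E.
Proof. by move=> mA mB AB; rewrite /area; apply: le_measure; rewrite ?inE. Qed.

Lemma area_U (R : realType) (A B : set (R * R)) :
  measurable A -> measurable B -> area (A `|` B) = (area A + area (B `\` A))%E.
Proof.
move=> mA mB; rewrite /area.
have -> : A `|` B = A `|` (B `\` A) by rewrite setUDr setDv setD0.
apply: measureU => //; first exact: measurableD.
exact: setDIK.
Qed.

Theorem theorem2 (R : realType) (W : set (R * R)) (Pos : set (R * R))
  (n : nat) (s : 'I_n -> R * R) (rs : 'I_n -> R)
  (m : nat) (rm : 'I_m -> R) (g : 'I_m -> R * R) :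
  measurable W ->
  (forall k, 0 < rs k) ->
  (forall i, 0 < rm i) ->
  greedy_HHP W Pos s rs rm g ->
  forall p : 'I_m -> R * R, (forall i, Pos (p i)) ->
  ((2^-1)%:E * covered_area W s rs rm p setT
     <= covered_area W s rs rm g setT)%E.
Proof.
move=> mW _ _ Hg p Pp.
set S := static_cover s rs.
pose G (k : nat) := W `&` (S `|` mobile_cover rm g [set j : 'I_m | (j < k)%N]).
pose Cm := G m.
pose E (j : 'I_m) := (W `&` disk (p j) (rm j)) `\` Cm.
pose En (k : nat) := if insub k is Some j then E j else set0.
have mS : measurable S by exact: stat_meas.
have mG : forall k, measurable (G k).
  by move=> k; apply: measurableI => //; apply: measurableU => //; exact: mob_meas.
have mE : forall j, measurable (E j).
  move=> j; apply: measurableD; last exact: mG.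
  by apply: measurableI => //; exact: disk_meas.
have mEn : forall k, measurable (En k).
  by move=> k; rewrite /En; case: insub => // j.
have GCm : forall k, G k `<=` Cm.
  move=> k x [Wx [Sx|[j _ Dx]]]; split => //; first by left.
  by right; exists j => //=; exact: ltn_ord.
have Hstep : forall j : 'I_m, (area (G j) + area (E j) <= area (G j.+1))%E.
  move=> j; have [_ H] := Hg j; have := H (p j) (Pp j).
  rewrite setIUr -/(G j) => Hj; apply: le_trans Hj.
  rewrite area_U //; last by apply: measurableI => //; exact: disk_meas.
  apply: leeD2l; apply: area_le => //.
    apply: measurableD; last exact: mG.
    by apply: measurableI => //; exact: disk_meas.
  by move=> x [Dx nCx]; split => // Gx; apply: nCx; exact: (GCm _ _ Gx).
have Hind : forall k, (k <= m)%N ->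
    (area (G 0%N) + \sum_(i < k) area (En i) <= area (G k))%E.
  elim=> [|k IH] Hk; first by rewrite big_ord0 adde0.
  rewrite big_ord_recr /= addeA.
  apply: le_trans (leeD2r _ (IH (ltnW Hk))) _.
  have -> : En k = E (Ordinal Hk) by rewrite /En -[k]/(val (Ordinal Hk)) valK.
  exact: (Hstep (Ordinal Hk)).
have Hsum : (\sum_(i < m) area (En i) <= area Cm)%E.
  apply: le_trans (Hind m (leqnn m)).
  by apply: leeDr; exact: measure_ge0.
have Hcov : W `&` (S `|` mobile_cover rm p setT) `<=`
            Cm `|` \big[setU/set0]_(i < m) En i.
  move=> x [Wx [Sx|[j _ Dx]]]; first by left; split => //; left.
  case: (pselect (Cm x)) => [Cx|nCx]; first by left.
  right; rewrite -bigcup_mkord; exists (val j); first exact: ltn_ord.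
  by rewrite /En valK.
have HCm : covered_area W s rs rm g setT = area Cm.
  rewrite /covered_area /Cm /G; congr (area (W `&` (S `|` mobile_cover rm g _))).
  by apply/seteqP; split => j //= _; exact: ltn_ord.
have mU : measurable (\big[setU/set0]_(i < m) En i).
  by apply: bigsetU_measurable => i _; exact: mEn.
have HP : (covered_area W s rs rm p setT <= area Cm + area Cm)%E.
  apply: le_trans (_ : area (Cm `|` \big[setU/set0]_(i < m) En i) <= _)%E.
    rewrite /covered_area -/S; apply: (@area_le R _ _ _ _ Hcov).
      by apply: measurableI => //; apply: measurableU => //; exact: mob_meas.
    by apply: measurableU => //; exact: mG.
  apply: le_trans (_ : area Cm + area (\big[setU/set0]_(i < m) En i) <= _)%E.
    by apply: measureU2 => //; exact: mG.
  apply: leeD2l; apply: le_trans Hsum.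
  by rewrite /area; apply: Boole_inequality => i _; exact: mEn.
rewrite HCm.
apply: le_trans (_ : (2^-1)%:E * (area Cm + area Cm) <= _)%E.
  apply: lee_wpmul2l; last exact: HP.
  by rewrite lee_fin invr_ge0.
have h0 : (0 <= area Cm)%E by rewrite /area; exact: measure_ge0.
case: (area Cm) h0 => [r| |] // _ /=.
- by rewrite -EFinD -EFinM lee_fin; lra.
- by rewrite leey.
Qed.
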